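(* Let $A,B\in\mathcal A_n$ with $A<B$ in ASM order. Then $\mathbf x^A-\mathbf x^B=L(x)\,M(x)$, where $L(x)=\prod_{i,j}x_{ij}^{c_{ij}}$ is a Laurent monomial with all $c_{ij}\ge-1$, and $M(x)$ is a polynomial with nonnegative coefficients and zero constant term in minors of $x$ of size $1$ or $2$ whose row indices are consecutive and whose column indices are consecutive.
   Context: $\mathcal A_n$ is the set of $n\times n$ alternating sign matrices (entries in $\{-1,0,1\}$, partial row and column sums in $\{0,1\}$, full row and column sums $1$). Corner sum matrix $\widetilde A(i,j)=\sum_{p\le i,q\le j}a_{pq}$; ASM order: $A\le B$ iff $\widetilde A(i,j)\ge\widetilde B(i,j)$ for all $i,j$, and $A<B$ means $A\le B$, $A\ne B$. $x=(x_{ij})$ is a matrix of commuting indeterminates, $\mathbf x^A=\prod_{i,j}x_{ij}^{a_{ij}}$. *)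

(* Defs.v *)
From HB Require Import structures.
From mathcomp Require Import all_boot all_order all_algebra.
Set Implicit Arguments. Unset Strict Implicit. Unset Printing Implicit Defensive.
Import Order.TTheory GRing.Theory Num.Theory.
Local Open Scope ring_scope.

Definition is_asm (n : nat) (A : 'M[int]_n) : Prop :=
  (forall i j, A i j \in [:: -1; 0; 1]) /\
  (forall i (k : 'I_n), \sum_(j < n | (j <= k)%N) A i j \in [:: 0; 1]) /\
  (forall j (k : 'I_n), \sum_(i < n | (i <= k)%N) A i j \in [:: 0; 1]) /\
  (forall i, \sum_(j < n) A i j = 1) /\
  (forall j, \sum_(i < n) A i j = 1).

Definition corner_sum (n : nat) (A : 'M[int]_n) (i j : 'I_n) : int :=
  \sum_(p < n | (p <= i)%N) \sum_(q < n | (q <= j)%N) A p q.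

Definition asm_le (n : nat) (A B : 'M[int]_n) : Prop :=
  forall i j, corner_sum B i j <= corner_sum A i j.

Definition asm_lt (n : nat) (A B : 'M[int]_n) : Prop := asm_le A B /\ A <> B.

Definition xmon (F : fieldType) (n : nat) (x : 'M[F]_n) (C : 'M[int]_n) : F :=
  \prod_(i < n) \prod_(j < n) (x i j) ^ (C i j).

(* Minors of x of size 1, or of size 2 with consecutive rows i,i+1 and
   consecutive columns j,j+1. *)
Inductive cminor (n : nat) : Type :=
| Minor1 (i j : 'I_n)
| Minor2 (i j : nat) (hi : (i.+1 < n)%N) (hj : (j.+1 < n)%N).

Definition eval_minor (F : fieldType) (n : nat) (x : 'M[F]_n) (m : cminor n) : F :=
  match m with
  | Minor1 i j => x i j
  | Minor2 i j hi hj =>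
      x (Ordinal (ltnW hi)) (Ordinal (ltnW hj)) * x (Ordinal hi) (Ordinal hj)
      - x (Ordinal (ltnW hi)) (Ordinal hj) * x (Ordinal hi) (Ordinal (ltnW hj))
  end.

(* A polynomial in the minors with nonnegative (natural) coefficients:
   a list of terms (coefficient, list of minor factors). *)
Definition minor_poly (n : nat) := seq (nat * seq (cminor n)).

Definition no_const_term (n : nat) (M : minor_poly n) : bool :=
  all (fun t => ~~ nilp t.2) M.

Definition eval_mpoly (F : fieldType) (n : nat) (x : 'M[F]_n) (M : minor_poly n) : F :=
  \sum_(t <- M) (t.1)%:R * \prod_(m <- t.2) eval_minor x m.

(* Main.v *)
Require Import Defs.
From HB Require Import structures.
From mathcomp Require Import all_boot all_order all_algebra.
From mathcomp Require Import zify.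
Import Order.TTheory GRing.Theory Num.Theory.
Local Open Scope ring_scope.
Set Implicit Arguments. Unset Strict Implicit.


Section S.
Variable n : nat.
Implicit Types A B C : 'M[int]_n.

Definition cs A (k l : nat) : int :=
  \sum_(p < n | (p < k)%N) \sum_(q < n | (q < l)%N) A p q.

Lemma sum_ltS (F : 'I_n -> int) k (hk : (k < n)%N) :
  \sum_(p < n | (p < k.+1)%N) F p = \sum_(p < n | (p < k)%N) F p + F (Ordinal hk).
Proof.
rewrite (bigD1 (Ordinal hk)) //= addrC; congr (_ + _).
apply: eq_bigl => p; rewrite ltnS leq_eqVlt -val_eqE /=.
by case: (ltngtP p k).
Qed.

Lemma sum_ltn (F : 'I_n -> int) k : (n <= k)%N ->
  \sum_(p < n | (p < k)%N) F p = \sum_(p < n) F p.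
Proof. move=> h; apply: eq_bigl => p; apply: leq_trans (ltn_ord p) h. Qed.

Lemma cs0l A l : cs A 0 l = 0.
Proof. by rewrite /cs big_pred0. Qed.
Lemma cs0r A k : cs A k 0 = 0.
Proof. by rewrite /cs big1 // => p _; rewrite big_pred0. Qed.

Lemma csSl A k l (hk : (k < n)%N) :
  cs A k.+1 l - cs A k l = \sum_(q < n | (q < l)%N) A (Ordinal hk) q.
Proof. by rewrite /cs sum_ltS addrC addKr. Qed.

Lemma csSr A k l (hl : (l < n)%N) :
  cs A k l.+1 - cs A k l = \sum_(p < n | (p < k)%N) A p (Ordinal hl).
Proof.
rewrite /cs -sumrB; apply: eq_bigr => p _.
by rewrite sum_ltS addrC addKr.
Qed.

Lemma cs_entry A (p q : 'I_n) :
  A p q = (cs A p.+1 q.+1 - cs A p.+1 q) - (cs A p q.+1 - cs A p q).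
Proof.
rewrite !csSr; have hp := ltn_ord p; have hq := ltn_ord q.
rewrite (sum_ltS _ hp) addrC addKr.
by congr (A _ _); apply: val_inj.
Qed.

Lemma csD A B k l : cs (A + B) k l = cs A k l + cs B k l.
Proof.
rewrite /cs -big_split; apply: eq_bigr => p _; rewrite -big_split.
by apply: eq_bigr => q _; rewrite mxE.
Qed.

Lemma csN A k l : cs (- A) k l = - cs A k l.
Proof.
rewrite /cs -sumrN; apply: eq_bigr => p _; rewrite -sumrN.
by apply: eq_bigr => q _; rewrite mxE.
Qed.

Lemma sum_eq1 (P : pred 'I_n) (F : 'I_n -> int) a :
  \sum_(p < n | P p) ((p == a)%:R * F p) = (P a)%:R * F a.
Proof.
rewrite big_mkcond (bigD1 a) //= eqxx mul1r big1 ?addr0.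
  by case: (P a); rewrite ?mul1r ?mul0r.
by move=> p hp; rewrite (negbTE hp) mul0r; case: (P p).
Qed.

Lemma cs_delta (a b : 'I_n) k l :
  cs (delta_mx a b) k l = ((a < k)%N && (b < l)%N)%:R.
Proof.
rewrite /cs.
transitivity (\sum_(p < n | (p < k)%N) (((b < l)%N)%:R * (p == a)%:R : int)).
  apply: eq_bigr => p _.
  have := sum_eq1 (fun q : 'I_n => (q < l)%N) (fun _ => (p == a)%:R) b => /= <-.
  by apply: eq_bigr => q _; rewrite mxE -natrM mulnb andbC.
rewrite (eq_bigr (fun p : 'I_n => (p == a)%:R * ((b < l)%N)%:R)); last by move=> p _; rewrite mulrC.
by rewrite sum_eq1 -natrM mulnb.
Qed.
End S.


Section X.
Variables (F : fieldType) (n : nat) (x : 'M[F]_n).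
Hypothesis xnz : forall i j, x i j != 0.

Lemma xmonD (C D : 'M[int]_n) : xmon x (C + D) = xmon x C * xmon x D.
Proof.
rewrite /xmon -big_split; apply: eq_bigr => i _; rewrite -big_split.
by apply: eq_bigr => j _; rewrite mxE expfzDr.
Qed.

Lemma xmon_delta (a b : 'I_n) : xmon x (delta_mx a b) = x a b.
Proof.
rewrite /xmon (bigD1 a) //= (bigD1 b) //= !mxE !eqxx /= expr1z big1 ?mulr1.
  rewrite big1 ?mulr1 // => i hi; apply: big1 => j _.
  by rewrite mxE (negbTE hi) expr0z.
by move=> j hj; rewrite mxE eqxx (negbTE hj) expr0z.
Qed.

Definition mons (E : 'M[int]_n) : seq (cminor n) :=
  flatten [seq flatten [seq nseq `|E i j|%N (Minor1 i j) | j <- enum 'I_n] | i <- enum 'I_n].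

Lemma prod_nseq k (m : cminor n) :
  \prod_(y <- nseq k m) eval_minor x y = eval_minor x m ^+ k.
Proof. by elim: k => [|k IH]; rewrite ?big_nil ?expr0 // big_cons IH exprS. Qed.

Lemma prod_mons (E : 'M[int]_n) : (forall i j, 0 <= E i j) ->
  \prod_(m <- mons E) eval_minor x m = xmon x E.
Proof.
move=> hE; rewrite /mons big_flatten big_map /xmon big_enum /=.
apply: eq_bigr => i _; rewrite big_flatten big_map big_enum /=.
apply: eq_bigr => j _; rewrite prod_nseq /= exprnP gez0_abs //.
Qed.
End X.


Section St.
Variables (n i j : nat) (hi : (i.+1 < n)%N) (hj : (j.+1 < n)%N).
Definition i0 : 'I_n := Ordinal (ltnW hi).
Definition i1 : 'I_n := Ordinal hi.
Definition j0 : 'I_n := Ordinal (ltnW hj).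
Definition j1 : 'I_n := Ordinal hj.

Definition stepmx (A : 'M[int]_n) : 'M[int]_n :=
  A - delta_mx i0 j0 + delta_mx i0 j1 + delta_mx i1 j0 - delta_mx i1 j1.
Definition c0mx (A : 'M[int]_n) : 'M[int]_n :=
  A - delta_mx i0 j0 - delta_mx i1 j1.

Lemma step_xmon (F : fieldType) (x : 'M[F]_n) (A : 'M[int]_n) :
  (forall i j, x i j != 0) ->
  xmon x A - xmon x (stepmx A) = xmon x (c0mx A) * eval_minor x (Minor2 hi hj).
Proof.
move=> xnz.
have eA : A = c0mx A + delta_mx i0 j0 + delta_mx i1 j1 by rewrite /c0mx addrAC !subrK.
have eA' : stepmx A = c0mx A + delta_mx i0 j1 + delta_mx i1 j0.
  by rewrite /stepmx /c0mx addrAC (addrAC (A - delta_mx i0 j0)).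
rewrite {1}eA eA' !xmonD // !xmon_delta //= /i0 /i1 /j0 /j1.
rewrite mulrBr !mulrA; congr (_ - _).
Qed.
End St.

Lemma combine n (A A' B c0 : 'M[int]_n) (m2 : cminor n) :
  (forall i j, -1 <= c0 i j) ->
  (forall (F : fieldType) (x : 'M[F]_n), (forall i j, x i j != 0) ->
      xmon x A - xmon x A' = xmon x c0 * eval_minor x m2) ->
  (exists (c : 'M[int]_n) (M : minor_poly n),
    (forall i j, -1 <= c i j) /\ no_const_term M /\
    forall (F : fieldType) (x : 'M[F]_n), (forall i j, x i j != 0) ->
      xmon x A' - xmon x B = xmon x c * eval_mpoly x M) ->
  exists (c : 'M[int]_n) (M : minor_poly n),
    (forall i j, -1 <= c i j) /\ no_const_term M /\
    forall (F : fieldType) (x : 'M[F]_n), (forall i j, x i j != 0) ->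
      xmon x A - xmon x B = xmon x c * eval_mpoly x M.
Proof.
move=> hc0 h1 [c' [M' [hc' [hM' h2]]]].
pose c := \matrix_(i, j) Num.min (c0 i j) (c' i j).
exists c, ((1%N, mons (c0 - c) ++ [:: m2])
           :: [seq (t.1, mons (c' - c) ++ t.2) | t <- M']).
split; first by move=> i j; rewrite mxE le_min hc0 hc'.
split.
  rewrite /no_const_term /= /nilp size_cat /= addnS /=.
  move: hM'; rewrite /no_const_term; clear.
  elim: M' => //= t M' IH /andP[ht hM]; rewrite IH // andbT /nilp size_cat.
  by move: ht; rewrite /nilp; case: (size t.2) => //= k _; rewrite addnS.
move=> F x xnz.
have pos0 : forall i j, 0 <= (c0 - c) i j by move=> i j; rewrite !mxE subr_ge0 ge_min lexx.
have pos' : forall i j, 0 <= (c' - c) i j by move=> i j; rewrite !mxE subr_ge0 ge_min lexx orbT.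
have -> : xmon x A - xmon x B = (xmon x A - xmon x A') + (xmon x A' - xmon x B).
  by rewrite addrA subrK.
rewrite h1 // h2 // /eval_mpoly big_cons big_map /= mul1r big_cat /= big_cons big_nil mulr1.
rewrite prod_mons // mulrDr mulrA -xmonD // [c + _]addrC subrK; congr (_ + _).
have ec : xmon x c' = xmon x c * xmon x (c' - c) by rewrite -xmonD // addrC subrK.
rewrite ec -mulrA mulr_sumr; congr (_ * _).
apply: eq_bigr => t _; rewrite big_cat /= prod_mons //.
by rewrite mulrCA.
Qed.


Definition valid n (A : 'M[int]_n) :=
  (forall k l, (k <= n)%N -> (l < n)%N -> 0 <= cs A k l.+1 - cs A k l <= 1) /\
  (forall k l, (k < n)%N -> (l <= n)%N -> 0 <= cs A k.+1 l - cs A k l <= 1).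

Lemma valid_entry n (A : 'M[int]_n) p q : valid A -> -1 <= A p q.
Proof.
case=> [V1 _]; rewrite cs_entry.
have h1 := V1 p.+1 q (ltn_ord p) (ltn_ord q).
have h2 := V1 p q (ltnW (ltn_ord p)) (ltn_ord q).
lia.
Qed.

Section Step.
Variables (n i j : nat) (hi : (i.+1 < n)%N) (hj : (j.+1 < n)%N).

Lemma cs_step A k l :
  cs (stepmx hi hj A) k l = cs A k l - ((k == i.+1) && (l == j.+1))%:R.
Proof.
rewrite /stepmx !csD !csN !cs_delta /=.
have [hk1|hk1] := ltnP i k; have [hk2|hk2] := ltnP i.+1 k;
have [hl1|hl1] := ltnP j l; have [hl2|hl2] := ltnP j.+1 l;
case: eqP => [ek|nk]; case: eqP => [el|nl]; rewrite /= ?mulr0n ?mulr1n; lia.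
Qed.
End Step.

Section Step2.
Variables (n i j : nat) (hi : (i.+1 < n)%N) (hj : (j.+1 < n)%N).

Lemma c0_bound (A : 'M[int]_n) : valid A -> valid (stepmx hi hj A) ->
  forall p q, -1 <= c0mx hi hj A p q.
Proof.
move=> vA vA' p q; have h1 := valid_entry p q vA; have h2 := valid_entry p q vA'.
move: h2; rewrite /stepmx /c0mx !mxE /= -!val_eqE /=.
case: eqP => ?; case: eqP => ?; case: eqP => ?; case: eqP => ?;
  rewrite /= ?mulr0n ?mulr1n; lia.
Qed.

Lemma step_valid (A : 'M[int]_n) :
  valid A ->
  cs A i.+1 j.+1 - cs A i.+1 j = 1 ->
  cs A i.+1 j.+2 - cs A i.+1 j.+1 = 0 ->
  cs A i.+1 j.+1 - cs A i j.+1 = 1 ->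
  cs A i.+2 j.+1 - cs A i.+1 j.+1 = 0 ->
  valid (stepmx hi hj A).
Proof.
move=> [V1 V2] hL hR hU hD; split.
- move=> k l hk hl; rewrite !cs_step.
  have := V1 k l hk hl.
  have [->|nk] := eqVneq k i.+1; last by rewrite /= ?mulr0n; lia.
  have [->|nl] := eqVneq l j.
    by rewrite /= ?eqxx /= (_ : (j == j.+1) = false) ?mulr0n ?mulr1n; [lia|lia].
  have [->|nl2] := eqVneq l j.+1.
    by rewrite /= ?eqxx /= (_ : (j.+2 == j.+1) = false) ?mulr0n ?mulr1n; [lia|lia].
  by rewrite /= (_ : (l.+1 == j.+1) = false) ?(negbTE nl2) ?mulr0n; [lia|lia].
- move=> k l hk hl; rewrite !cs_step.
  have := V2 k l hk hl.
  have [->|nl] := eqVneq l j.+1; last by rewrite /= !andbF ?mulr0n; lia.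
  rewrite ?eqxx !andbT.
  have [->|nk] := eqVneq k i.
    by rewrite /= ?eqxx /= (_ : (i == i.+1) = false) ?mulr0n ?mulr1n; [lia|lia].
  have [->|nk2] := eqVneq k i.+1.
    by rewrite /= ?eqxx /= (_ : (i.+2 == i.+1) = false) ?mulr0n ?mulr1n; [lia|lia].
  by rewrite /= (_ : (k.+1 == i.+1) = false) ?(negbTE nk2) ?mulr0n; [lia|lia].
Qed.
End Step2.


Lemma find_step n (A B : 'M[int]_n) : valid A -> valid B ->
  (forall k l, (k <= n)%N -> (l <= n)%N -> cs B k l <= cs A k l) ->
  (forall l, cs A n l = cs B n l) -> (forall k, cs A k n = cs B k n) ->
  (exists k l, [/\ (k <= n)%N, (l <= n)%N & cs B k l < cs A k l]) ->
  exists i j (hi : (i.+1 < n)%N) (hj : (j.+1 < n)%N),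
  [/\ cs A i.+1 j.+1 - cs A i.+1 j = 1,
      cs A i.+1 j.+2 - cs A i.+1 j.+1 = 0,
      cs A i.+1 j.+1 - cs A i j.+1 = 1,
      cs A i.+2 j.+1 - cs A i.+1 j.+1 = 0 &
      cs B i.+1 j.+1 < cs A i.+1 j.+1].
Proof.
move=> [VA1 VA2] [VB1 VB2] hle bn1 bn2 [k0 [l0 [hk0 hl0 hlt0]]].
pose K (k l : nat) : int := 4 * (cs A k l - cs B k l) + 2 * cs A k l - (k + l)%:Z.
pose P := fun c : 'I_n.+1 * 'I_n.+1 => 0 < cs A c.1 c.2 - cs B c.1 c.2.
pose key := fun c : 'I_n.+1 * 'I_n.+1 => K c.1 c.2.
have Pc0 : P (Ordinal (hk0 : (k0 < n.+1)%N), Ordinal (hl0 : (l0 < n.+1)%N)).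
  by rewrite /P /=; lia.
case: (@arg_maxP _ int _ _ P key Pc0) => c Pc Hmax.
have Hm : forall c', P c' -> key c' <= key c by move=> c' /Hmax.
case: c Pc Hm {Hmax} => [[k hk] [l hl]]; rewrite /P /key /= => Pc Hm.
have hkn : (k <= n)%N by [].
have hln : (l <= n)%N by [].
case: k hk hkn Pc Hm => [|i] hk hkn Pc Hm; first by move: Pc; rewrite !cs0l; lia.
case: l hl hln Pc Hm => [|j] hl hln Pc Hm; first by move: Pc; rewrite !cs0r; lia.
have hi : (i.+1 < n)%N.
  by rewrite ltn_neqAle hkn andbT; apply/eqP => ei; move: Pc; rewrite ei bn1; lia.
have hj : (j.+1 < n)%N.
  by rewrite ltn_neqAle hln andbT; apply/eqP => ej; move: Pc; rewrite ej bn2; lia.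
exists i, j, hi, hj; split; last by lia.
- have h1 := VA1 i.+1 j (ltnW hi) (ltnW hj).
  have h2 := VB1 i.+1 j (ltnW hi) (ltnW hj).
  have := Hm (Ordinal hk, Ordinal (ltnW hl : (j < n.+1)%N)); rewrite /P /key /K /=.
  lia.
- have h1 := VA1 i.+1 j.+1 (ltnW hi) hj.
  have h2 := VB1 i.+1 j.+1 (ltnW hi) hj.
  have := Hm (Ordinal hk, Ordinal (hj : (j.+2 < n.+1)%N)); rewrite /P /key /K /=.
  lia.
- have h1 := VA2 i j.+1 (ltnW hi) (ltnW hj).
  have h2 := VB2 i j.+1 (ltnW hi) (ltnW hj).
  have := Hm (Ordinal (ltnW hk : (i < n.+1)%N), Ordinal hl); rewrite /P /key /K /=.
  lia.
- have h1 := VA2 i.+1 j.+1 hi (ltnW hj).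
  have h2 := VB2 i.+1 j.+1 hi (ltnW hj).
  have := Hm (Ordinal (hi : (i.+2 < n.+1)%N), Ordinal hl); rewrite /P /key /K /=.
  lia.
Qed.


Definition Pot n (A : 'M[int]_n) : int :=
  \sum_(k < n.+1) \sum_(l < n.+1) cs A k l.

Lemma sum_ind m (b : nat) (hb : (b < m)%N) :
  \sum_(l < m) ((l : nat) == b)%:R = 1%R :> int.
Proof.
rewrite (bigD1 (Ordinal hb)) //= eqxx big1 ?addr0 // => l hl.
suff -> : ((l : nat) == b) = false by [].
by apply/negbTE; move: hl; rewrite -val_eqE.
Qed.

Lemma Pot_step n i j (hi : (i.+1 < n)%N) (hj : (j.+1 < n)%N) (A : 'M[int]_n) :
  Pot (stepmx hi hj A) = Pot A - 1.
Proof.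
rewrite /Pot.
transitivity (\sum_(k < n.+1) (\sum_(l < n.+1) cs A k l - ((k : nat) == i.+1)%:R)).
  apply: eq_bigr => k _.
  rewrite (_ : ((k:nat) == i.+1)%:R = \sum_(l < n.+1) (((k:nat) == i.+1) && ((l:nat) == j.+1))%:R :> int); last first.
    case: eqP => _; first by rewrite (sum_ind (ltnW hj : (j.+1 < n.+1)%N)).
    by rewrite big1.
  rewrite -sumrB; apply: eq_bigr => l _; by rewrite cs_step.
by rewrite sumrB sum_ind // ltnW.
Qed.

Definition concl n (A B : 'M[int]_n) :=
  exists (c : 'M[int]_n) (M : minor_poly n),
    (forall i j, -1 <= c i j) /\ no_const_term M /\
    forall (F : fieldType) (x : 'M[F]_n), (forall i j, x i j != 0) ->
      xmon x A - xmon x B = xmon x c * eval_mpoly x M.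

Lemma main_ind n (N : nat) : forall (A B : 'M[int]_n), valid A -> valid B ->
  (forall k l, (k <= n)%N -> (l <= n)%N -> cs B k l <= cs A k l) ->
  (forall l, cs A n l = cs B n l) -> (forall k, cs A k n = cs B k n) ->
  Pot A - Pot B < N%:Z -> concl A B.
Proof.
elim: N => [|N IH] A B vA vB hle bn1 bn2 hP.
  suff : 0 <= Pot A - Pot B by lia.
  rewrite /Pot -sumrB sumr_ge0 // => k _; rewrite -sumrB sumr_ge0 // => l _.
  by rewrite subr_ge0 hle // -ltnS.
have [ex|nex] := boolP [exists c : 'I_n.+1 * 'I_n.+1, cs B c.1 c.2 < cs A c.1 c.2].
  have [i [j [hi [hj [hL hR hU hD hlt]]]]] : exists i j (hi : (i.+1 < n)%N) (hj : (j.+1 < n)%N),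
    [/\ cs A i.+1 j.+1 - cs A i.+1 j = 1,
      cs A i.+1 j.+2 - cs A i.+1 j.+1 = 0,
      cs A i.+1 j.+1 - cs A i j.+1 = 1,
      cs A i.+2 j.+1 - cs A i.+1 j.+1 = 0 &
      cs B i.+1 j.+1 < cs A i.+1 j.+1].
    apply: find_step => //.
    case/existsP: ex => [[k l] /= h]; exists k, l; split => //; by rewrite -ltnS.
  have vA' := step_valid hi hj vA hL hR hU hD.
  apply: (combine (c0_bound vA vA') (fun F x xnz => step_xmon hi hj A xnz)).
  apply: IH => //.
  - move=> k l hk hl; rewrite cs_step.
    case: eqP => [ek|_]; last by rewrite /= mulr0n subr0 hle.
    case: eqP => [el|_]; last by rewrite /= mulr0n subr0 hle.
    by rewrite ek el /= mulr1n; lia.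
  - move=> l; rewrite cs_step (_ : (n == i.+1) = false) ?bn1 /= ?mulr0n ?subr0 //; lia.
  - move=> k; rewrite cs_step (_ : (n == j.+1) = false) ?bn2 /= ?andbF ?mulr0n ?subr0 //; lia.
  - rewrite Pot_step; lia.
have eqcs : forall k l, (k <= n)%N -> (l <= n)%N -> cs A k l = cs B k l.
  move=> k l hk hl; apply/eqP; rewrite eq_le hle // andbT leNgt.
  apply/negP => h; move/existsP: nex; apply.
  by exists (Ordinal (hk : (k < n.+1)%N), Ordinal (hl : (l < n.+1)%N)).
have -> : A = B.
  apply/matrixP => p q; rewrite (cs_entry A) (cs_entry B).
  have hp := ltn_ord p; have hq := ltn_ord q.
  by rewrite !eqcs // ltnW.
exists 0, [::]; split; first by move=> i j; rewrite mxE.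
split => // F x _; by rewrite subrr /eval_mpoly big_nil mulr0.
Qed.


Lemma in01 (s : int) : s \in [:: 0; 1] -> 0 <= s <= 1.
Proof. by rewrite !inE => /orP[/eqP->|/eqP->]. Qed.

Lemma asm_valid n (A : 'M[int]_n) : is_asm A -> valid A.
Proof.
case=> [_ [Hr [Hc _]]]; split.
- move=> [|k] l hk hl; rewrite csSr; first by rewrite big_pred0.
  have := Hc (Ordinal hl) (Ordinal (hk : (k < n)%N)) => /in01.
  by rewrite (eq_bigl (fun p : 'I_n => (p <= k)%N)) // => p; rewrite ltnS.
- move=> k [|l] hk hl; rewrite csSl; first by rewrite big_pred0.
  have := Hr (Ordinal hk) (Ordinal (hl : (l < n)%N)) => /in01.
  by rewrite (eq_bigl (fun p : 'I_n => (p <= l)%N)) // => p; rewrite ltnS.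
Qed.

Lemma asm_bn1 n (A : 'M[int]_n) l : is_asm A ->
  cs A n l = \sum_(q < n | (q < l)%N) 1.
Proof.
case=> [_ [_ [_ [_ Hc]]]]; rewrite /cs sum_ltn // exchange_big /=.
by apply: eq_bigr => q _; rewrite Hc.
Qed.

Lemma asm_bn2 n (A : 'M[int]_n) k : is_asm A ->
  cs A k n = \sum_(p < n | (p < k)%N) 1.
Proof.
case=> [_ [_ [_ [Hr _]]]]; rewrite /cs.
by apply: eq_bigr => p _; rewrite sum_ltn // Hr.
Qed.

Lemma corner_cs n (A : 'M[int]_n) (i j : 'I_n) : corner_sum A i j = cs A i.+1 j.+1.
Proof.
rewrite /corner_sum /cs; apply: eq_big => p; first by rewrite ltnS.
by move=> _; apply: eq_bigl => q; rewrite ltnS.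
Qed.

Unset Implicit Arguments.
Theorem mainTheorem14 (n : nat) (A B : 'M[int]_n) :
  is_asm A -> is_asm B -> asm_lt A B ->
  exists (c : 'M[int]_n) (M : minor_poly n),
    (forall i j, -1 <= c i j) /\ no_const_term M /\
    forall (F : fieldType) (x : 'M[F]_n), (forall i j, x i j != 0) ->
      xmon x A - xmon x B = xmon x c * eval_mpoly x M.
Proof.
move=> aA aB [hle _].
apply: (@main_ind n (`|Pot A - Pot B|%N).+1) => //.
- exact: asm_valid.
- exact: asm_valid.
- move=> [|k] [|l] hk hl; rewrite ?cs0l ?cs0r //.
  have := hle (Ordinal (hk : (k < n)%N)) (Ordinal (hl : (l < n)%N)).
  by rewrite !corner_cs.
- by move=> l; rewrite !asm_bn1.
- by move=> k; rewrite !asm_bn2.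
- lia.
Qed.
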